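(* Consider the setting in the context with $\mathbf{Q}_\Delta$ given by the LU trick, and assume $\mathbf{A}$ is invertible. For $k\in\mathbb{N}$ let $\mathbf{T}_S(\mu,k)=\big(\mathbf{I}_{LMN}-\hat{\mathbf{P}}^{-1}\mathbf{C}\big)^k$ be the iteration matrix of $k$ smoother iterations. Then the smoother converges if $\mu$ is large enough and at least $M$ iterations are performed: for every $k\ge M$ there exist a fixed value $\mu^*_{S,\infty}>0$ and a constant $c>0$ independent of $\mu$ (but depending on $k$) such that for all $\mu>\mu^*_{S,\infty}$, $$\rho\big(\mathbf{T}_S(\mu,k)\big)\le \frac{c}{\mu}.$$
   Context: Fix positive integers $L$ (time steps), $M$ (collocation nodes), $N$ (spatial degrees of freedom). Let $0<\tau_1<\dots<\tau_M=1$ be the (right) Gauss–Radau nodes on $[0,1]$, $\ell_j$ the Lagrange basis polynomials, $\mathbf{Q}=(q_{m,j})\in\mathbb{R}^{M\times M}$ with $q_{m,j}=\int_0^{\tau_m}\ell_j(s)\,ds$. LU trick: write $\mathbf{Q}^T=\mathbf{L}_Q\mathbf{U}_Q$ with $\mathbf{L}_Q$ unit lower triangular and $\mathbf{U}_Q$ upper triangular, and set $\mathbf{Q}_\Delta=\mathbf{U}_Q^T$. Let $\mathbf{A}\in\mathbb{C}^{N\times N}$ and $\mu>0$ (CFL number). Let $\mathbf{N}_M\in\mathbb{R}^{M\times M}$ have ones in its last column and zeros elsewhere, $\mathbf{H}=\mathbf{N}_M\otimes\mathbf{I}_N$, $\mathbf{E}\in\mathbb{R}^{L\times L}$ with ones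 on the first subdiagonal and zeros elsewhere. $\mathbf{C}=\mathbf{I}_{LMN}-\mu\,\mathbf{I}_L\otimes\mathbf{Q}\otimes\mathbf{A}-\mathbf{E}\otimes\mathbf{H}$, $\hat{\mathbf{P}}=\mathbf{I}_{LMN}-\mu\,\mathbf{I}_L\otimes\mathbf{Q}_\Delta\otimes\mathbf{A}$ (assumed invertible). $\rho$ denotes the spectral radius. *)

(* Defs.v *)
From HB Require Import structures.
From mathcomp Require Import all_boot all_order all_algebra.
From mathcomp Require Import reals.
From mathcomp Require Import complex mxtens.
Set Implicit Arguments.
Unset Strict Implicit.
Unset Printing Implicit Defensive.
Import Order.TTheory GRing.Theory Num.Theory.
Local Open Scope ring_scope.

Section Defs.
Variable R : realType.

(* The M right Gauss--Radau nodes on [0,1] are the roots of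
   d^(M-1)/dx^(M-1) [ x^(M-1) (x-1)^M ]  (a degree-M polynomial with
   M simple roots in (0,1], the largest being 1). *)
Definition radau_poly (M : nat) : {poly R} :=
  ('X ^+ M.-1 * ('X - 1) ^+ M)^`(M.-1).

Definition gauss_radau_nodes (M : nat) (tau : 'I_M -> R) : Prop :=
  (forall i j : 'I_M, (i < j)%N -> tau i < tau j) /\
  (forall i : 'I_M, root (radau_poly M) (tau i)).

Definition lagrange (M : nat) (tau : 'I_M -> R) (j : 'I_M) : {poly R} :=
  \prod_(k < M | k != j) (('X - (tau k)%:P) * ((tau j - tau k)^-1)%:P).

(* Antiderivative of a polynomial vanishing at 0, so that
   int_0^t p(s) ds = (prim p).[t]. *)
Definition prim (p : {poly R}) : {poly R} :=
  \poly_(i < (size p).+1)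
     (if i is i'.+1 then p`_i' / (i'.+1)%:R else 0).

Definition collocQ (M : nat) (tau : 'I_M -> R) : 'M[R]_M :=
  \matrix_(m, j) (prim (lagrange tau j)).[tau m].

Definition unit_lower_triangular (M : nat) (L : 'M[R]_M) : Prop :=
  is_trig_mx L /\ (forall i, L i i = 1).
Definition upper_triangular (M : nat) (U : 'M[R]_M) : Prop :=
  is_trig_mx U^T.

Definition cplx_mx (m n : nat) (B : 'M[R]_(m, n)) : 'M[R[i]]_(m, n) :=
  map_mx (fun x => (x%:C)%C) B.

Definition lastcol_mx (M : nat) : 'M[R[i]]_M :=
  \matrix_(i, j) ((nat_of_ord j == M.-1)%:R).

Definition subdiag_mx (L : nat) : 'M[R[i]]_L :=
  \matrix_(i, j) ((nat_of_ord i == (nat_of_ord j).+1)%:R).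

Definition sdc_C (L M N : nat) (Q : 'M[R]_M) (A : 'M[R[i]]_N) (mu : R)
  : 'M[R[i]]_(L * (M * N)) :=
  1%:M - (mu%:C)%C *: ((1%:M : 'M[R[i]]_L) *t (cplx_mx Q *t A))
       - subdiag_mx L *t (lastcol_mx M *t (1%:M : 'M[R[i]]_N)).

Definition sdc_Phat (L M N : nat) (QD : 'M[R]_M) (A : 'M[R[i]]_N) (mu : R)
  : 'M[R[i]]_(L * (M * N)) :=
  1%:M - (mu%:C)%C *: ((1%:M : 'M[R[i]]_L) *t (cplx_mx QD *t A)).

Definition smoother_T (L M N : nat) (Q QD : 'M[R]_M) (A : 'M[R[i]]_N)
  (mu : R) (k : nat) : 'M[R[i]]_(L * (M * N)) :=
  (1%:M - invmx (sdc_Phat L QD A mu) *m sdc_C L Q A mu) ^+ k.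

Definition eigenvalues (n : nat) (B : 'M[R[i]]_n) : seq R[i] :=
  sval (closed_field_poly_normal (char_poly B)).

Definition spectral_radius (n : nat) (B : 'M[R[i]]_n) : R :=
  \big[Num.max/0]_(z <- eigenvalues B) complex.Re `|z|.

End Defs.

(* Main.v *)
Require Import Defs.
From HB Require Import structures.
From mathcomp Require Import all_boot all_order all_algebra.
From mathcomp Require Import reals.
From mathcomp Require Import complex mxtens.
From mathcomp Require Import ring lra zify.
Import Order.TTheory GRing.Theory Num.Theory.
Local Open Scope ring_scope.
Import Normc.

Section Norm.
Context {R : realType}.
Implicit Types x y z : R[i].

Lemma normc_ge0 x : 0 <= normc x.
Proof. by case: x => a b; rewrite /normc sqrtr_ge0. Qed.

Lemma normc_sum (I : Type) (r : seq I) (P : pred I) (F : I -> R[i]) :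
  normc (\sum_(i <- r | P i) F i) <= \sum_(i <- r | P i) normc (F i).
Proof.
elim/big_rec2: _ => [|i y1 y2 _ IH]; first by rewrite normc0.
by apply: le_trans (le_normcD _ _) _; rewrite lerD2l.
Qed.

Lemma normcR (a : R) : normc (a%:C)%C = `|a|.
Proof. by rewrite /normc /= expr0n /= addr0 sqrtr_sqr. Qed.

Lemma normc_pos x : x != 0 -> 0 < normc x.
Proof.
move=> x0; rewrite lt_def normc_ge0 andbT; apply/eqP => /eq0_normc.
by move/eqP: x0.
Qed.

Definition mn {m n} (A : 'M[R[i]]_(m, n)) : R := \sum_i \sum_j normc (A i j).

Lemma mn_ge0 {m n} (A : 'M[R[i]]_(m, n)) : 0 <= mn A.
Proof. by apply: sumr_ge0 => i _; apply: sumr_ge0 => j _; apply: normc_ge0. Qed.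

Lemma mnD {m n} (A B : 'M[R[i]]_(m, n)) : mn (A + B) <= mn A + mn B.
Proof.
rewrite /mn -big_split /=; apply: ler_sum => i _.
rewrite -big_split /=; apply: ler_sum => j _; rewrite mxE; exact: le_normcD.
Qed.

Lemma mnN {m n} (A : 'M[R[i]]_(m, n)) : mn (- A) = mn A.
Proof. by apply: eq_bigr => i _; apply: eq_bigr => j _; rewrite mxE normcN. Qed.

Lemma mnZ {m n} a (A : 'M[R[i]]_(m, n)) : mn (a *: A) = normc a * mn A.
Proof.
rewrite /mn mulr_sumr; apply: eq_bigr => i _; rewrite mulr_sumr.
by apply: eq_bigr => j _; rewrite mxE normcM.
Qed.

Lemma mnB {m n} (A B : 'M[R[i]]_(m, n)) : mn (A - B) <= mn A + mn B.
Proof. by rewrite -(mnN B); apply: mnD. Qed.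

Lemma mn_row {m n} (B : 'M[R[i]]_(m, n)) l : \sum_j normc (B l j) <= mn B.
Proof.
rewrite /mn (bigD1 l) //= lerDl; apply: sumr_ge0 => i _.
by apply: sumr_ge0 => j _; apply: normc_ge0.
Qed.

Lemma mnM {m n p} (A : 'M[R[i]]_(m, n)) (B : 'M[R[i]]_(n, p)) :
  mn (A *m B) <= mn A * mn B.
Proof.
rewrite [mn A]/mn mulr_suml [mn (A *m B)]/mn; apply: ler_sum => i _.
have step : \sum_j normc ((A *m B) i j) <= \sum_(j < p) \sum_(l < n) normc (A i l) * normc (B l j).
  apply: ler_sum => j _; rewrite mxE; apply: le_trans (normc_sum _ _ _ _) _.
  by apply: ler_sum => l _; rewrite normcM.
apply: le_trans step _.
rewrite exchange_big /= mulr_suml; apply: ler_sum => l _.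
rewrite -mulr_sumr; apply: ler_wpM2l; first exact: normc_ge0.
exact: mn_row.
Qed.

Lemma mn1 n : mn (1%:M : 'M[R[i]]_n) <= n%:R.
Proof.
rewrite /mn (eq_bigr (fun _ => 1)); first by rewrite sumr_const card_ord.
move=> i _; rewrite (bigD1 i) //= big1 ?addr0; last first.
  by move=> j /negPf ji; rewrite mxE eq_sym ji normc0.
by rewrite mxE eqxx normc1.
Qed.

Lemma mn_eig n (B : 'M[R[i]]_n) (v : 'rV[R[i]]_n) z :
  v *m B = z *: v -> v != 0 -> normc z <= mn B.
Proof.
move=> Hv v0.
have pv : 0 < mn v.
  have [j Hj] : exists j, v 0 j != 0.
    apply/existsP; apply: contraR v0; rewrite negb_exists => /forallP H.
    apply/eqP/matrixP => i j; rewrite (ord1 i) mxE; exact/eqP/negPn/H.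
  rewrite /mn big_ord1 (bigD1 j) //=; apply: ltr_pwDl; first exact: normc_pos.
  by apply: sumr_ge0 => l _; apply: normc_ge0.
have := mnM v B; rewrite Hv mnZ [_ * mn v]mulrC.
by rewrite ler_pM2l.
Qed.

End Norm.

Lemma nilp_strict (Rg : pzRingType) n (B : 'M[Rg]_n) :
  (forall i j : 'I_n, (j <= i)%N -> B i j = 0) ->
  forall k, (n <= k)%N -> B ^+ k = 0.
Proof.
move=> HB.
have H : forall k (i j : 'I_n), (j < i + k)%N -> (B ^+ k) i j = 0.
  elim=> [|k IH] i j ji.
    rewrite expr0 mxE; case: eqVneq => // eij.
    by move: ji; rewrite eij addn0 ltnn.
  rewrite exprSr -mulmxE mxE big1 // => l _.
  case: (ltnP l (i + k)) => hl; first by rewrite IH // mul0r.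
  by rewrite HB ?mulr0 //; rewrite addnS ltnS in ji; apply: leq_trans hl.
move=> k nk; apply/matrixP => i j; rewrite mxE H //.
by apply: leq_trans (ltn_ord j) _; apply: leq_trans nk (leq_addl _ _).
Qed.

Section Pow.
Variable R : realType.

Lemma mnX n (x : 'M[R[i]]_n) (b : R) j : 1 <= b -> mn x <= b ->
  mn (x ^+ j) <= n%:R * b ^+ j.
Proof.
move=> b1 xb; elim: j => [|j IH]; first by rewrite !expr0 mulr1; apply: mn1.
rewrite exprS -mulmxE; apply: le_trans (mnM _ _) _.
rewrite exprS mulrCA; apply: ler_pM => //; [exact: mn_ge0 | exact: mn_ge0].
Qed.

Lemma mn_powdiff n (x y : 'M[R[i]]_n) (b : R) k : 1 <= b -> mn x <= b -> mn y <= b ->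
  mn (x ^+ k - y ^+ k) <= k%:R * n%:R * b ^+ k * mn (x - y).
Proof.
move=> b1 xb yb; elim: k => [|k IH]; first by rewrite !expr0 subrr /mn big1 ?mul0r // => i _; rewrite big1 // => j _; rewrite mxE normc0.
have -> : x ^+ k.+1 - y ^+ k.+1 = x *m (x ^+ k - y ^+ k) + (x - y) *m y ^+ k.
  by rewrite !mulmxE mulrBr mulrBl -!exprS addrA subrK.
apply: le_trans (mnD _ _) _.
have h1 := mnM x (x ^+ k - y ^+ k).
have h2 := mnM (x - y) (y ^+ k).
have h3 := mnX _ _ _ k b1 yb.
set D := mn (x ^+ k - y ^+ k) in IH h1 *.
set d := mn (x - y) in IH h2 *.
set Y := mn (y ^+ k) in h2 h3 *.
set B := b ^+ k in IH h3 *.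
have d0 : 0 <= d by apply: mn_ge0.
have D0 : 0 <= D by apply: mn_ge0.
have x0 : 0 <= mn x by apply: mn_ge0.
have B1 : 1 <= B by apply: exprn_ege1.
have n0 : 0 <= (n%:R : R) by [].
have k0 : 0 <= (k%:R : R) by [].
rewrite exprS -/B.
have e1 : mn x * D <= b * (k%:R * n%:R * B * d) by apply: ler_pM.
have e2 : d * Y <= d * (n%:R * B) by apply: ler_wpM2l.
have e3 : 0 <= n%:R * B * d * (b - 1).
  apply: mulr_ge0; last by rewrite subr_ge0.
  apply: mulr_ge0 => //; apply: mulr_ge0 => //; lra.
rewrite -natr1.
lra.
Qed.
End Pow.

Section Poly.
Context {R : realType}.

Lemma coef_prim (p : {poly R}) i :
  (prim p)`_i = if i is i'.+1 then p`_i' / (i'.+1)%:R else 0.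
Proof.
rewrite /prim coef_poly; case: ltnP => // h.
case: i h => // i h; rewrite nth_default ?mul0r //.
Qed.

Lemma prim_lin (I : finType) (c : I -> R) (F : I -> {poly R}) :
  prim (\sum_i c i *: F i) = \sum_i c i *: prim (F i).
Proof.
apply/polyP => i; rewrite coef_prim !coef_sum.
case: i => [|i]; first by rewrite big1 // => k _; rewrite coefZ coef_prim mulr0.

rewrite coef_sum mulr_suml; apply: eq_bigr => k _.
by rewrite !coefZ coef_prim mulrA.
Qed.

Lemma radau0 M : (0 < M)%N -> (radau_poly R M).[0] != 0.
Proof.
move=> M0; rewrite /radau_poly horner_coef0 coef_derivn addn0 coefXnM ltnn subnn.
rewrite -horner_coef0 hornerE hornerD hornerN hornerX hornerC sub0r ffactnn mulrn_eq0 negb_or.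
by rewrite -lt0n fact_gt0 /= expf_eq0 oppr_eq0 oner_eq0 andbF.
Qed.


Lemma radau_inj M (tau : 'I_M -> R) : gauss_radau_nodes tau -> injective tau.
Proof.
move=> [mono _] i j e; apply/val_inj; case: (ltngtP i j) => // h.
  by have := mono _ _ h; rewrite e ltxx.
by have := mono _ _ h; rewrite e ltxx.
Qed.

Lemma lagr_node M (tau : 'I_M -> R) i j : injective tau ->
  (Defs.lagrange tau j).[tau i] = (i == j)%:R.
Proof.
move=> inj; rewrite /Defs.lagrange horner_prod.
under eq_bigr do rewrite hornerM hornerXsubC hornerC.
case: eqVneq => [->|ij].
  rewrite big1 // => k kj; rewrite divff // subr_eq0.
  by apply/eqP => /inj e; move: kj; rewrite e eqxx.
by rewrite (bigD1 i) //= subrr !mul0r.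
Qed.

Lemma size_lagr M (tau : 'I_M -> R) j : (size (Defs.lagrange tau j) <= M)%N.
Proof.
rewrite /Defs.lagrange; apply: leq_trans (size_poly_prod_leq _ _) _.
have h1 : (\sum_(k < M | k != j) size ((('X - (tau k)%:P) * ((tau j - tau k)^-1)%:P)%R)
   <= \sum_(k < M | k != j) 2)%N.
  apply: leq_sum => k _; apply: leq_trans (size_polyMleq _ _) _.
  have -> : size ('X - (tau k)%:P) = 2%N by rewrite size_XsubC.
  have := size_polyC_leq1 ((tau j - tau k)^-1).
  by case: (size _) => [|[|s]].
rewrite sum_nat_const in h1.
have hc : #|(fun k : 'I_M => k != j)| = M.-1.
  by have := cardC1 j; rewrite card_ord => <-; apply: eq_card.
move: h1; rewrite hc.
set s := (\sum_(_ < M | _) _)%N.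
have := ltn_ord j; lia.
Qed.


Lemma collocQ_unit M (tau : 'I_M -> R) : gauss_radau_nodes tau -> (0 < M)%N ->
  (collocQ tau)^T \in unitmx.
Proof.
move=> gr M0; have inj := @radau_inj M tau gr.
rewrite unitmxE unitfE; apply/negP => /det0P [v v0 Hv].
set p := \sum_j v 0 j *: Defs.lagrange tau j.
have hroot : forall m, (prim p).[tau m] = 0.
  move=> m; move/matrixP: Hv => /(_ 0 m); rewrite !mxE => <-.
  rewrite /p prim_lin horner_sum; apply: eq_bigr => j _.
  by rewrite hornerZ !mxE.
have sp : (size p <= M)%N.
  rewrite /p; apply: (big_ind (fun q : {poly R} => (size q <= M)%N)).
  - by rewrite size_poly0.
  - by move=> x y hx hy; apply: leq_trans (size_polyD _ _) _; rewrite geq_max hx hy.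
  - by move=> j _; apply: leq_trans (size_scale_leq _ _) (size_lagr _ _ _).
have hp0 : prim p = 0.
  apply/eqP; apply: contraT => hne.
  have := @max_poly_roots _ _ (0 :: [seq tau m | m <- enum 'I_M]) hne.
  have -> : all (root (prim p)) (0 :: [seq tau m | m <- enum 'I_M]).
    rewrite /= /root horner_coef0 coef_prim eqxx /=.
    by apply/allP => x /mapP [m _ ->]; apply/eqP/hroot.
  have -> : uniq (0 :: [seq tau m | m <- enum 'I_M]).
    rewrite /= map_inj_uniq // enum_uniq andbT; apply/mapP => [[m _ e]].
    have := radau0 M M0; case: gr => _ /(_ m) /rootP; rewrite -e => ->.
    by rewrite eqxx.
  move=> /(_ isT isT); rewrite /= size_map size_enum_ord => h.
  have := size_poly (size p).+1 (fun i => if i is i'.+1 then p`_i' / (i'.+1)%:R else 0).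
  rewrite -/(prim p) => h2; have := leq_trans h h2; rewrite ltnS => h3.
  by have := leq_trans h3 sp; rewrite ltnn.
have hp : p = 0.
  apply/polyP => i; have := congr1 (fun q : {poly R} => q`_i.+1) hp0.
  rewrite coef_prim coef0 => /eqP.
  by rewrite coef0 mulf_eq0 invr_eq0 pnatr_eq0 orbF => /eqP ->.
apply/negP: v0; apply/negPn/eqP/matrixP => i j; rewrite (ord1 i) mxE.
have := congr1 (fun q : {poly R} => q.[tau j]) hp; rewrite horner0 /p horner_sum (bigD1 j) //=.
rewrite big1 ?addr0; first by rewrite hornerZ lagr_node // eqxx mulr1.
by move=> l lj; rewrite hornerZ lagr_node // eq_sym (negbTE lj) mulr0.
Qed.

End Poly.

Section Tens.
Variable Rg : comPzRingType.

Lemma tens11 m p : (1%:M : 'M[Rg]_m) *t (1%:M : 'M[Rg]_p) = 1%:M.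
Proof.
apply/matrixP => i j.
case: (mxtens_indexP i) => i1 i2; case: (mxtens_indexP j) => j1 j2.
rewrite tensmxE !mxE (inj_eq (can_inj (@mxtens_indexK _ _))) xpair_eqE.
by case: (i1 == j1); case: (i2 == j2); rewrite /= ?mulr1 ?mulr0 ?mul0r.
Qed.

Lemma tensmxBl m n p q (A B : 'M[Rg]_(m, n)) (C : 'M[Rg]_(p, q)) :
  (A - B) *t C = A *t C - B *t C.
Proof. by apply/matrixP => i j; rewrite !mxE mulrBl. Qed.

Lemma tensmxBr m n p q (A B : 'M[Rg]_(m, n)) (C : 'M[Rg]_(p, q)) :
  C *t (A - B) = C *t A - C *t B.
Proof. by apply/matrixP => i j; rewrite !mxE mulrBr. Qed.

Lemma tens_pow l m p (X : 'M[Rg]_m) j :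
  ((1%:M : 'M[Rg]_l) *t (X *t (1%:M : 'M[Rg]_p))) ^+ j
  = (1%:M : 'M[Rg]_l) *t (X ^+ j *t (1%:M : 'M[Rg]_p)).
Proof.
elim: j => [|j IH]; first by rewrite !expr0 tens11 tens11.
by rewrite exprS IH -mulmxE !tensmx_mul !mul1mx mulmxE -exprS.
Qed.

End Tens.

Lemma spec_le (R : realType) n (B : 'M[R[i]]_n) (c : R) :
  0 <= c -> mn B <= c -> spectral_radius B <= c.
Proof.
move=> c0 Bc; rewrite /spectral_radius big_seq.
apply: (big_ind (fun x => x <= c)) => //.
  by move=> x y hx hy; rewrite ge_max hx hy.
move=> z; rewrite /eigenvalues; case: (closed_field_poly_normal _) => r Hr /= zr.
have : root (char_poly B) z.
  by rewrite Hr (monicP (char_poly_monic B)) scale1r root_prod_XsubC.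
rewrite -eigenvalue_root_char => /eigenvalueP [v Hv v0].
have := mn_eig _ _ _ _ Hv v0.
by move=> h; apply: le_trans h Bc.
Qed.

Theorem lemma2 (R : realType) (L M N : nat)
  (tau : 'I_M -> R) (LQ UQ : 'M[R]_M) (A : 'M[R[i]]_N) :
  (0 < L)%N -> (0 < M)%N -> (0 < N)%N ->
  gauss_radau_nodes tau ->
  unit_lower_triangular LQ -> upper_triangular UQ ->
  (collocQ tau)^T = LQ *m UQ ->
  A \in unitmx ->
  forall k : nat, (M <= k)%N ->
  exists mustar : R, 0 < mustar /\
  exists c : R, 0 < c /\
  forall mu : R, mustar < mu ->
    sdc_Phat L UQ^T A mu \in unitmx ->
    spectral_radius (smoother_T L (collocQ tau) UQ^T A mu k) <= c / mu.
Proof.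
move=> L0 M0 NN0 gr [LQt LQ1] UQt HQ uA k Mk.
have uU : UQ \in unitmx.
  by have := collocQ_unit _ _ gr M0; rewrite HQ unitmx_mul => /andP[].
set cD := cplx_mx UQ^T.
set cQ := cplx_mx (collocQ tau).
set Lt := cplx_mx LQ^T.
have uD : cD \in unitmx by rewrite /cD /cplx_mx map_unitmx unitmx_tr.
have eQ : invmx cD *m cQ = Lt.
  have -> : cQ = cD *m Lt.
    by rewrite /cQ /cD /Lt /cplx_mx -map_mxM -trmx_mul -HQ trmxK.
  by rewrite mulKmx.
have nilL : (Lt - 1%:M) ^+ k = 0.
  apply: (@nilp_strict _ M (Lt - 1%:M) _ k Mk) => i j ji; rewrite !mxE.
  case: (ltngtP j i) ji => // [ji _|/val_inj ->]; last by rewrite LQ1 eqxx subrr.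
  move/is_trig_mxP: LQt => /(_ _ _ ji) ->.
  have -> : (i == j) = false by apply/eqP => e; move: ji; rewrite e ltnn.
  by rewrite subr0 rmorph0.
set n := (L * (M * N))%N.
set K : 'M[R[i]]_n := 1%:M *t (cD *t A).
set KQ : 'M[R[i]]_n := 1%:M *t (cQ *t A).
set F : 'M[R[i]]_n := subdiag_mx R L *t (lastcol_mx R M *t 1%:M).
set Kinv : 'M[R[i]]_n := 1%:M *t (invmx cD *t invmx A).
set N0 : 'M[R[i]]_n := 1%:M *t ((Lt - 1%:M) *t 1%:M).
have KiK : Kinv *m K = 1%:M.
  by rewrite /Kinv /K !tensmx_mul mul1mx !mulVmx // !tens11.
have KiKQ : Kinv *m KQ - 1%:M = N0.
  rewrite /Kinv /KQ !tensmx_mul mul1mx eQ mulVmx // /N0 tensmxBl tensmxBr.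
  by rewrite !tens11.
have N0k : N0 ^+ k = 0.
  by rewrite /N0 tens_pow nilL !tens0mx tensmx0.
set a := mn N0; set b := mn Kinv; set f := mn (Kinv *m F).
have a0 : 0 <= a by apply: mn_ge0.
have b0 : 0 <= b by apply: mn_ge0.
have f0 : 0 <= f by apply: mn_ge0.
set t := 2 * a + 2 * f.
set s := b * t + f.
set be := 1 + t + a.
have t0 : 0 <= t by rewrite /t; lra.
have s0 : 0 <= s by rewrite /s; apply: addr_ge0 => //; apply: mulr_ge0.
have be1 : 1 <= be by rewrite /be; lra.
set c := k%:R * n%:R * be ^+ k * s + 1.
have c0' : 0 <= k%:R * n%:R * be ^+ k * s.
  apply: mulr_ge0 => //; apply: mulr_ge0 => //; last by apply: exprn_ge0; lra.
  by apply: mulr_ge0.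
exists (2 * b + 1); split; first lra.
exists c; split; first by rewrite /c; lra.
move=> mu hmu uP.
set m : R[i] := (mu%:C)%C.
have mu0 : 0 < mu by lra.
set P := sdc_Phat L UQ^T A mu.
set C := sdc_C L (collocQ tau) A mu.
have eP : P = 1%:M - m *: K by [].
have eC : C = 1%:M - m *: KQ - F by [].
rewrite /smoother_T -/P -/C.
set T := 1%:M - invmx P *m C.
have PT : P *m T = P - C by rewrite mulmxBr mulmx1 mulmxA mulmxV // mul1mx.
clearbody T.
have E1 : Kinv *m (P *m T) = Kinv *m T - m *: T.
  by rewrite eP mulmxBl mul1mx mulmxBr -scalemxAl -scalemxAr mulmxA KiK mul1mx.
have E2 : Kinv *m (P - C) = m *: (Kinv *m KQ) - m *: 1%:M + Kinv *m F.
  have -> : P - C = m *: KQ - m *: K + F.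
    by rewrite eP eC; apply/matrixP => i j; rewrite !mxE; ring.
  by rewrite mulmxDr mulmxBr -!scalemxAr KiK.
have key : m *: (T + N0) = Kinv *m T - Kinv *m F.
  move: E1; rewrite PT E2 -KiKQ.
  move: (Kinv *m T) (Kinv *m F) (Kinv *m KQ) => XT XF XQ E.
  apply/matrixP => i j; move/matrixP: E => /(_ i j); rewrite !mxE => e.
  apply/eqP; rewrite -subr_eq0.
  set u := XT i j; set w := XF i j; set q := XQ i j; set d := (i == j)%:R.
  set y := T i j.
  have -> : m * (y + (q - d)) - (u - w) = - ((u - m * y) - (m * q - m * d + w)).
    by ring.
  by rewrite e subrr oppr0.
have m0 : m != 0.
  apply/eqP => h; have := normcR mu; rewrite -/m h normc0 => /esym/eqP.
  by rewrite normr_eq0 gt_eqF.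
set S := Kinv *m T - Kinv *m F.
have Tdef : T + N0 = m^-1 *: S by rewrite /S -key scalerA mulVf ?scale1r.
set e := mu^-1.
have e0 : 0 < e by rewrite /e invr_gt0.
have emu : e * mu = 1 by rewrite /e mulVf // gt_eqF.
have nm : normc (m^-1) = e by rewrite normcV /m normcR ger0_norm // ltW.
have hS : mn S <= b * mn T + f.
  by apply: le_trans (mnB _ _) _; rewrite lerD2r; apply: mnM.
have hT : mn T <= e * mn S + a.
  have -> : T = m^-1 *: S - N0 by rewrite -Tdef addrK.
  by apply: le_trans (mnB _ _) _; rewrite mnZ nm.
have x0 : 0 <= mn T by apply: mn_ge0.
have Sx0 : 0 <= mn S by apply: mn_ge0.
have hT2 : mn T <= t.
  have h1 : e * mn S <= e * (b * mn T + f) by apply: ler_wpM2l => //; exact: ltW.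
  have h2 : e * b <= e * ((mu - 1) / 2) by apply: ler_wpM2l; [exact: ltW | lra].
  have h3 : e * 1 <= e * mu by apply: ler_wpM2l; [exact: ltW | lra].
  have h4 : 0 <= (1/2 - e * b) * mn T by apply: mulr_ge0 => //; lra.
  have h5 : 0 <= (1 - e) * f by apply: mulr_ge0 => //; lra.
  rewrite /t; lra.
have hS2 : mn S <= s.
  apply: le_trans hS _; rewrite /s lerD2r; exact: ler_wpM2l.
have hd : mn (T - - N0) <= e * s.
  by rewrite opprK Tdef mnZ nm; apply: ler_wpM2l => //; exact: ltW.
have hN : mn (- N0) <= be by rewrite mnN -/a /be; lra.
have hTb : mn T <= be by rewrite /be; lra.
have hp := @mn_powdiff R _ T (- N0) be k be1 hTb hN.
rewrite exprNn N0k mulr0 subr0 in hp.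
apply: spec_le; first by apply: divr_ge0; rewrite /c; lra.
apply: le_trans hp _.
have h6 : k%:R * n%:R * be ^+ k * mn (T - - N0) <= k%:R * n%:R * be ^+ k * (e * s).
  have cc : 0 <= k%:R * n%:R * be ^+ k.
    by apply: mulr_ge0; [apply: mulr_ge0 | apply: exprn_ge0; lra].
  by apply: ler_wpM2l; [exact: cc | exact: hd].
apply: le_trans h6 _.
rewrite -/e /c -/n; lra.
Qed.
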